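(* Let $V$ be a Whittaker module of type $\eta$ over $R$ with cyclic Whittaker vector $w$, and suppose $Z_V=(p(\Omega)^n)$ where $p$ is an irreducible polynomial and $n\ge1$. Let $V_i=Rp(\Omega)^iw$ for $i=0,\dots,n$ and $S_i=V_i/V_{i+1}$ for $i=0,\dots,n-1$. Then each $S_i$ is an irreducible Whittaker module of type $\eta$, and the $S_i$ are the factors of a composition series $V=V_0\supseteq V_1\supseteq\cdots\supseteq V_n$ of $V$. In particular, $V$ has finite length.
   Context: Let $f\in\mathbb{C}[H]$ be a polynomial. $R=R(f)$ is the associative $\mathbb{C}$-algebra generated by $E,F,H$ with relations $EF-FE=f(H)$, $HE-EH=E$, $HF-FH=-F$. Let $u\in\mathbb{C}[H]$ satisfy $f(H)=\tfrac12(u(H+1)-u(H))$ and $\Omega=2FE+u(H+1)$; the center $Z(R)$ is the polynomial ring $\mathbb{C}[\Omega]$. Let $R(E)=\mathbb{C}[E]$ and fix an algebra homomorphism $\eta:R(E)\to\mathbb{C}$ with $\eta(E)\neq0$. A vector $v$ of an $R$-module $V$ is a Whittaker vector of type $\eta$ if $Ev=\eta(E)v$; $V$ is a Whittaker module of type $\eta$ with cyclic Whittaker vector $w$ if $w$ is a Whittaker vector and $V=Rw$. $Z_V=\mathrm{Ann}_R(V)\cap Z(R)$. *)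

(* Defs.v *)
From mathcomp Require Import all_boot all_algebra.
From mathcomp Require Import reals Rstruct.
From mathcomp.real_closed Require Import complex.

Set Implicit Arguments.
Unset Strict Implicit.
Unset Printing Implicit Defensive.
Import GRing.Theory.
Local Open Scope ring_scope.

Notation C := (Rdefinitions.R[i]).

Section RModules.
Variable V : lmodType C.

Definition peval (q : {poly C}) (T : V -> V) (v : V) : V :=
  \sum_(i < size q) q`_i *: iter i T v.

(* An R(f)-module structure on V is given by the action of the generators
   E, F, H (linear maps) satisfying the defining relations of R(f). *)
Definition Rrel (f : {poly C}) (E F H : V -> V) : Prop :=
  [/\ forall v, E (F v) - F (E v) = peval f H v,
      forall v, H (E v) - E (H v) = E v &
      forall v, H (F v) - F (H v) = - F v].

Definition Omega (u : {poly C}) (E F H : V -> V) (v : V) : V :=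
  2%:R *: F (E v) + peval (u \Po ('X + 1)) H v.

Definition submodule (E F H : V -> V) (S : V -> Prop) : Prop :=
  [/\ S 0, (forall x y, S x -> S y -> S (x + y)),
      (forall (a : C) x, S x -> S (a *: x)) &
      [/\ forall x, S x -> S (E x), forall x, S x -> S (F x)
        & forall x, S x -> S (H x)]].

Definition gen (E F H : V -> V) (x : V) : V -> Prop :=
  fun v => forall S, submodule E F H S -> S x -> S v.

Definition subset_ (A B : V -> Prop) := forall v, A v -> B v.

(* For submodules A <= B, the quotient module B/A is irreducible:
   it is nonzero and has no submodules other than 0 and itself
   (submodules of B/A are the submodules C with A <= C <= B). *)
Definition quot_irreducible (E F H : V -> V) (A B : V -> Prop) : Prop :=
  (exists x, B x /\ ~ A x) /\
  forall S, submodule E F H S -> subset_ A S -> subset_ S B ->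
    subset_ S A \/ subset_ B S.

(* For submodules A <= B, B/A is a Whittaker module of type eta:
   there is x + A in B/A with E(x + A) = eta(E)(x + A) generating B/A,
   i.e. B = R x + A. *)
Definition quot_whittaker (E F H : V -> V) (eta : C) (A B : V -> Prop) : Prop :=
  exists x, [/\ B x, A (E x - eta *: x) &
    forall y, B y -> exists a, gen E F H x a /\ A (y - a)].

Definition composition_series (E F H : V -> V) (m : nat) (W : nat -> V -> Prop) :=
  [/\ forall v, W 0%N v, forall v, W m v -> v = 0 &
      forall i, (i < m)%N ->
        [/\ submodule E F H (W i), submodule E F H (W i.+1),
            subset_ (W i.+1) (W i) & quot_irreducible E F H (W i.+1) (W i)]].

Definition finite_length (E F H : V -> V) : Prop :=
  exists m W, composition_series E F H m W.

End RModules.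

(* Main.v *)
Require Import Defs.
From mathcomp Require Import all_boot all_algebra.
From mathcomp Require Import reals Rstruct.
From mathcomp.real_closed Require Import complex.
From Stdlib Require Import Classical.
From mathcomp Require Import zify.
Import GRing.Theory Num.Theory.
Local Open Scope ring_scope.
Set Implicit Arguments.
Unset Strict Implicit.

Definition lin (V : lmodType C) (T : V -> V) :=
  forall (a : C) x y, T (a *: x + y) = a *: T x + T y.

Arguments lin {V}.
Lemma lin_lin (V : lmodType C) (T : {linear V -> V}) : lin T.
Proof. by move=> a x y; rewrite linearP. Qed.

Section L.
Variable V : lmodType C.
Implicit Types T S : V -> V.

Lemma lin0 T : lin T -> T 0 = 0.
Proof. move=> hT; have := hT 1 0 0; rewrite !scale1r addr0 => h.
by apply: (addrI (T 0)); rewrite addr0 -h. Qed.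
Lemma linD T : lin T -> forall x y, T (x + y) = T x + T y.
Proof. by move=> hT x y; have := hT 1 x y; rewrite !scale1r. Qed.
Lemma linZ T : lin T -> forall a x, T (a *: x) = a *: T x.
Proof. by move=> hT a x; rewrite -[a *: x]addr0 hT lin0 // addr0. Qed.
Lemma linN T : lin T -> forall x, T (- x) = - T x.
Proof. by move=> hT x; rewrite -scaleN1r linZ // scaleN1r. Qed.
Lemma linB T : lin T -> forall x y, T (x - y) = T x - T y.
Proof. by move=> hT x y; rewrite linD // linN. Qed.
Lemma lin_sum T : lin T -> forall (N : nat) (G : 'I_N -> V),
  T (\sum_(i < N) G i) = \sum_(i < N) T (G i).
Proof.
move=> hT N G; elim/big_rec2: _ => [|i y1 y2 _ <-]; first exact: lin0.
by rewrite linD.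
Qed.

Arguments lin0 {T}. Arguments linD {T}. Arguments linZ {T}. Arguments linN {T}.
Arguments linB {T}. Arguments lin_sum {T}.

Lemma iter_lin T k : lin T -> lin (iter k T).
Proof. move=> hT; elim: k => [//|k IH] a x y /=. by rewrite IH hT. Qed.

Lemma iter_comm T k v : iter k T (T v) = T (iter k T v).
Proof. by rewrite -iterSr iterS. Qed.

Lemma peval_widen (q : {poly C}) T v N : (size q <= N)%N ->
  peval q T v = \sum_(i < N) q`_i *: iter i T v.
Proof.
move=> hN; rewrite /peval (big_ord_widen N (fun i => q`_i *: iter i T v)) //.
rewrite [RHS](bigID (fun i : 'I_N => (i < size q)%N)) /= [X in _ = _ + X]big1 ?addr0 //.
by move=> i; rewrite -leqNgt => hi; rewrite nth_default // scale0r.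
Qed.

Lemma pevalD (q r : {poly C}) T v : peval (q + r) T v = peval q T v + peval r T v.
Proof.
rewrite !(@peval_widen _ _ _ (maxn (size q) (size r))) ?leq_maxl ?leq_maxr ?size_polyD //.
by rewrite -big_split /=; apply: eq_bigr => i _; rewrite coefD scalerDl.
Qed.

Lemma pevalZ (a : C) (q : {poly C}) T v : peval (a *: q) T v = a *: peval q T v.
Proof.
rewrite !(@peval_widen _ _ _ (size q)) ?size_scale_leq // scaler_sumr.
by apply: eq_bigr => i _; rewrite coefZ scalerA.
Qed.

Lemma peval0 T v : peval 0 T v = 0.
Proof. by rewrite (@peval_widen _ _ _ 0) ?size_poly0 // big_ord0. Qed.
Lemma pevalN q T v : peval (- q) T v = - peval q T v.
Proof. by rewrite -(scaleN1r q) pevalZ scaleN1r. Qed.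
Lemma pevalB q r T v : peval (q - r) T v = peval q T v - peval r T v.
Proof. by rewrite pevalD pevalN. Qed.

Lemma pevalC (c : C) T v : peval c%:P T v = c *: v.
Proof.
rewrite (@peval_widen _ _ _ 1) ?size_polyC ?leq_b1 // big_ord1 coefC /=.
done.
Qed.

Lemma peval1 T v : peval 1 T v = v.
Proof. by rewrite -polyC1 pevalC scale1r. Qed.

Lemma peval_mulX q T v : peval (q * 'X) T v = peval q T (T v).
Proof.
rewrite (@peval_widen _ _ _ (size q).+1); last first.
  by have [->|/size_mulX ->] := eqVneq q 0; rewrite ?mul0r ?size_poly0.
rewrite big_ord_recl coefMX eqxx scale0r add0r /peval.
by apply: eq_bigr => i _; rewrite coefMX /= add0n iter_comm.
Qed.

Lemma peval_lin q T : lin T -> lin (peval q T).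
Proof.
move=> hT a x y; rewrite /peval scaler_sumr -big_split /=.
by apply: eq_bigr => i _; rewrite iter_lin // scalerDr !scalerA mulrC.
Qed.

Lemma peval_comm q T v : lin T -> T (peval q T v) = peval q T (T v).
Proof.
move=> hT; rewrite /peval lin_sum //; apply: eq_bigr => i _.
by rewrite linZ // iter_comm.
Qed.

Lemma pevalX T v : peval 'X T v = T v.
Proof. by rewrite -['X]mul1r peval_mulX peval1. Qed.

Lemma peval_mul q r T v : lin T -> peval (q * r) T v = peval q T (peval r T v).
Proof.
move=> hT; elim/poly_ind: q v => [|q c IH] v; first by rewrite mul0r !peval0.
rewrite mulrDl mulrAC pevalD mul_polyC pevalZ peval_mulX IH.
by rewrite pevalD peval_mulX pevalC peval_comm.
Qed.

Lemma peval_shift S T (b : C) g v : lin S -> lin T ->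
  (forall v, S (T v) = T (S v) + b *: S v) ->
  S (peval g T v) = peval (g \Po ('X + b%:P)) T (S v).
Proof.
move=> hS hT hST; elim/poly_ind: g v => [|q c IH] v.
  by rewrite comp_poly0 !peval0 lin0.
rewrite pevalD peval_mulX pevalC linD // (linZ hS) IH hST.
rewrite comp_polyD comp_polyM comp_polyX comp_polyC mulrDr pevalD pevalD.
rewrite peval_mul // pevalX pevalC mulrC mul_polyC pevalZ.
set Q := q \Po _.
by rewrite (linD (peval_lin Q hT)) (linZ (peval_lin Q hT)).
Qed.

Lemma peval_sub0 q T (P : V -> Prop) : P 0 -> (forall x y, P x -> P y -> P (x + y)) ->
  (forall (a : C) x, P x -> P (a *: x)) -> (forall x, P x -> P (T x)) ->
  forall x, P x -> P (peval q T x).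
Proof.
move=> h0 hD hZ hT x hx; rewrite /peval; elim/big_ind: _ => // i _.
apply: hZ; elim: (nat_of_ord i) => //= k; exact: hT.
Qed.
End L.

Lemma shift_const (k : {poly C}) : k \Po ('X + (-1)%:P) = k -> (size k <= 1)%N.
Proof.
move=> E; rewrite leqNgt; apply/negP => hk.
have h1 : size k != 1%N by rewrite neq_ltn hk orbT.
have [r hr] := closed_rootP k h1.
have hroot : forall m : nat, root k (r + m%:R).
  elim=> [|m IH]; first by rewrite addr0.
  rewrite /root in IH *.
  have -> : k.[r + m.+1%:R] = k.[r + m%:R].
    rewrite -{1}E horner_comp hornerD hornerX hornerC.
    by rewrite -natr1 addrA addrK.
  exact: IH.
have knz : k != 0 by rewrite -size_poly_eq0 -lt0n (ltn_trans _ hk).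
have H := @max_poly_roots _ k [seq r + i%:R | i <- iota 0 (size k)] knz.
have hall : all (root k) [seq r + i%:R | i <- iota 0 (size k)].
  by apply/allP => x /mapP [m _ ->]; apply: hroot.
have hu : uniq [seq r + i%:R | i <- iota 0 (size k)].
  rewrite map_inj_uniq ?iota_uniq // => m1 m2 /addrI /eqP.
  by rewrite eqr_nat => /eqP.
by have := H hall hu; rewrite size_map size_iota ltnn.
Qed.

Lemma size_shift_lt (k : {poly C}) : k != 0 ->
  (size (k \Po ('X + (-1)%:P) - k)%R < size k)%N.
Proof.
move=> knz; set D := (k \Po ('X + (-1)%:P) - k).
have hs : size (k \Po ('X + (-1)%:P)) = size k by rewrite size_comp_poly2 // size_XaddC.
have hl : lead_coef (k \Po ('X + (-1)%:P)) = lead_coef k.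
  by rewrite lead_coef_comp ?size_XaddC // lead_coefXaddC expr1n mulr1.
have hle : (size D <= size k)%N.
  by rewrite /D (leq_trans (size_polyD _ _)) // size_polyN hs maxnn.
have hc : D`_(size k).-1 = 0.
  by rewrite /D coefB -{1}hs -lead_coefE hl lead_coefE subrr.
rewrite ltn_neqAle hle andbT; apply/eqP => hD.
have : lead_coef D = 0 by rewrite lead_coefE hD.
move/eqP; rewrite lead_coef_eq0 => /eqP D0.
by move: hD; rewrite D0 size_poly0 => /esym/eqP; rewrite size_poly_eq0 (negPf knz).
Qed.

Lemma irr_lin (p : {poly C}) : irreducible_poly p ->
  exists c a, c != 0 /\ p = c *: ('X - a%:P).
Proof.
move=> hp; have h1 : size p != 1%N by rewrite neq_ltn hp.1 orbT.
have [a ha] := closed_rootP p h1.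
have hd : 'X - a%:P %| p by rewrite dvdp_XsubCl.
have := hp.2 _ _ hd; rewrite size_XsubC => /(_ isT) /eqpP [[c1 c2]] /= /andP [c1n c2n] h.
exists (c1 / c2), a; split; first by rewrite mulf_neq0 ?invr_eq0.
by rewrite mulrC -scalerA h scalerA mulVf // scale1r.
Qed.

Section Mod.
Variable V : lmodType C.
Variables E F H : V -> V.

Lemma gen_in x : gen E F H x x.
Proof. by move=> S _. Qed.

Lemma gen_min x S : submodule E F H S -> S x -> forall v, gen E F H x v -> S v.
Proof. by move=> hS hx v; apply. Qed.

Lemma gen_sub x : submodule E F H (gen E F H x).
Proof.
split.
- by move=> S [].
- by move=> a b ha hb S hS hx; have [_ hD _ _] := hS; apply: hD; [apply: ha|apply: hb].
- by move=> c a ha S hS hx; have [_ _ hZ _] := hS; apply: hZ; apply: ha.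
split.
- by move=> a ha S hS hx; have [_ _ _ [hE _ _]] := hS; apply: hE; apply: ha.
- by move=> a ha S hS hx; have [_ _ _ [_ hF _]] := hS; apply: hF; apply: ha.
- by move=> a ha S hS hx; have [_ _ _ [_ _ hH]] := hS; apply: hH; apply: ha.
Qed.

Lemma subB S x y : submodule E F H S -> S x -> S y -> S (x - y).
Proof.
case=> _ hD hZ _ hx hy; apply: hD => //; rewrite -scaleN1r; exact: hZ.
Qed.

Lemma sub_pevalH S g x : submodule E F H S -> S x -> S (peval g H x).
Proof. case=> h0 hD hZ [_ _ hH]; exact: peval_sub0. Qed.

End Mod.

Section Om.
Variables (f u : {poly C}).
Hypothesis hfu : f = 2%:R^-1 *: (u \Po ('X + 1) - u).
Variable V : lmodType C.
Variables E F H : {linear V -> V}.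
Hypothesis hrel : Rrel f E F H.

Let U := u \Po ('X + 1).
Let Om := Omega u E F H.

Lemma two_nz : (2%:R : C) != 0.
Proof. by rewrite pnatr_eq0. Qed.

Lemma f2 : 2%:R *: f = U - u.
Proof. by rewrite hfu scalerA mulfV ?two_nz // scale1r. Qed.

Lemma hEH v : E (H v) = H (E v) + (-1) *: E v.
Proof.
case: hrel => _ h _; move: (E v) (H (E v)) (E (H v)) (h v) => c a b <-.
by rewrite scaleN1r opprB addrC subrK.
Qed.

Lemma hFH v : F (H v) = H (F v) + 1 *: F v.
Proof.
case: hrel => _ _ h; move: (F v) (H (F v)) (F (H v)) (h v) => c a b hh.
by rewrite scale1r -[c]opprK -hh opprB addrC subrK.
Qed.

Lemma hHH v : H (H v) = H (H v) + 0 *: H v.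
Proof. by rewrite scale0r addr0. Qed.

Lemma hEF v : E (F v) = F (E v) + peval f H v.
Proof.
case: hrel => h _ _; move: (peval f H v) (E (F v)) (F (E v)) (h v) => c a b <-.
by rewrite addrC subrK.
Qed.

Lemma Om_lin : lin Om.
Proof.
move=> a x y; rewrite /Om /Omega !linearP (peval_lin _ (lin_lin H)).
by rewrite !scalerA [a * _]mulrC addrACA.
Qed.

Lemma Om_E v : E (Om v) = Om (E v).
Proof.
rewrite /Om /Omega linearD linearZ /= hEF.
rewrite (peval_shift _ _ (lin_lin E) (lin_lin H) hEH).
have -> : (u \Po ('X + 1)) \Po ('X + (-1)%:P) = u.
  by rewrite -comp_polyA comp_polyD comp_polyX (comp_poly_multiplicative _).2 polyCN polyC1 subrK comp_polyXr.
rewrite scalerDr -addrA; congr (_ + _).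
by rewrite -pevalZ f2 pevalB subrK.
Qed.

Lemma Om_F v : F (Om v) = Om (F v).
Proof.
rewrite /Om /Omega linearD linearZ /= hEF linearD /=.
rewrite (peval_shift _ _ (lin_lin F) (lin_lin H) hFH).
rewrite (peval_shift _ _ (lin_lin F) (lin_lin H) hFH).
rewrite scalerDr -addrA -pevalZ -comp_polyZ f2 polyC1 comp_polyB -/U.
by rewrite pevalB subrK.
Qed.

Lemma Om_H v : H (Om v) = Om (H v).
Proof.
rewrite /Om /Omega linearD linearZ /= (peval_comm _ _ (lin_lin H)).
congr (_ *: _ + _).
have h1 : forall y, H (F y) = F (H y) - F y.
  by move=> y; rewrite hFH scale1r addrK.
by rewrite h1 hEH scaleN1r linearB.
Qed.

End Om.

Lemma key_irr (V : lmodType C) (E F H : V -> V) (S : V -> Prop) (eta : C) (x : V) :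
  lin E -> lin H -> (forall v, E (H v) = H (E v) + (-1) *: E v) -> eta != 0 ->
  E x = eta *: x -> submodule E F H S ->
  forall g, g != 0 -> S (peval g H x) -> S x.
Proof.
move=> hE hH hEH heta hx hS g.
have [h0 hD hZ [hSE _ _]] := hS.
elim: (size g) {-2}g (leqnn (size g)) => [|N IH] {}g hg gnz hSg.
  by move: gnz; rewrite -size_poly_eq0 -leqn0 hg.
case: (leqP (size g) 1) => h1.
  have ge := size1_polyC h1.
  rewrite ge pevalC in hSg.
  have c0 : g`_0 != 0.
    by apply: contra gnz => /eqP c0; rewrite ge c0.
  by have := hZ (g`_0)^-1 _ hSg; rewrite scalerA mulVf // scale1r.
set h := g \Po ('X + (-1)%:P) - g.
have hnz : h != 0.
  apply/eqP => /eqP; rewrite subr_eq0 => /eqP /shift_const.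
  by rewrite leqNgt h1.
have hsz : (size h <= N)%N by rewrite -ltnS (leq_trans (size_shift_lt gnz)).
apply: (IH h hsz hnz).
rewrite /h pevalB; apply: (subB hS) => //.
have e : E (peval g H x) = eta *: peval (g \Po ('X + (-1)%:P)) H x.
  by rewrite (peval_shift _ _ hE hH hEH) hx (linZ (peval_lin _ hH)).
by have := hZ eta^-1 _ (hSE _ hSg); rewrite e scalerA mulVf // scale1r.
Qed.

Unset Implicit Arguments.
Theorem mainTheorem11
  (f u : {poly C})
  (hfu : f = 2%:R^-1 *: (u \Po ('X + 1) - u))
  (V : lmodType C) (E F H : {linear V -> V})
  (hrel : Rrel f E F H)
  (eta : C) (heta : eta != 0)
  (w : V) (hw : E w = eta *: w) (hcyc : forall v, gen E F H w v)
  (p : {poly C}) (n : nat) (hp : irreducible_poly p) (hn : (0 < n)%N)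
  (hZ : forall q : {poly C},
          (forall v, peval q (Omega u E F H) v = 0) <-> (p ^+ n %| q)) :
  let Vi := fun i : nat => gen E F H (peval (p ^+ i) (Omega u E F H) w) in
  (forall i, (i < n)%N ->
     quot_irreducible E F H (Vi i.+1) (Vi i) /\
     quot_whittaker E F H eta (Vi i.+1) (Vi i))
  /\ composition_series E F H n Vi
  /\ finite_length E F H.
Proof.
move=> Vi.
have lE := lin_lin E; have lF := lin_lin F; have lH := lin_lin H.
have lOm : lin (Omega u E F H) := Om_lin u E F H.
set Om := Omega u E F H in Vi hZ lOm *.
have hEO : forall y, E (Om y) = Om (E y) + 0 *: E y.
  by move=> y; rewrite scale0r addr0 /Om (Om_E hfu hrel).
have hFO : forall y, F (Om y) = Om (F y) + 0 *: F y.
  by move=> y; rewrite scale0r addr0 /Om (Om_F hfu hrel).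
have hHO : forall y, H (Om y) = Om (H y) + 0 *: H y.
  by move=> y; rewrite scale0r addr0 /Om (Om_H u hrel).
have cE : forall q v, E (peval q Om v) = peval q Om (E v).
  by move=> q v; rewrite (peval_shift _ _ lE lOm hEO) polyC0 addr0 comp_polyXr.
have cF : forall q v, F (peval q Om v) = peval q Om (F v).
  by move=> q v; rewrite (peval_shift _ _ lF lOm hFO) polyC0 addr0 comp_polyXr.
have cH : forall q v, H (peval q Om v) = peval q Om (H v).
  by move=> q v; rewrite (peval_shift _ _ lH lOm hHO) polyC0 addr0 comp_polyXr.
have subOm : forall S q x, submodule E F H S -> S x -> S (peval q Om x).
  move=> S q x hS hx; have [h0 hD hZs [hE hF hH]] := hS.
  apply: (peval_sub0 q h0 hD hZs _ hx) => y hy; rewrite /Om /Omega.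
  apply: hD; first by apply: hZs; apply: hF; apply: hE.
  exact: (sub_pevalH _ hS hy).
have ker : forall q, submodule E F H (fun v => peval q Om v = 0).
  move=> q; have lq := peval_lin q lOm; split.
  - exact: lin0.
  - by move=> x y hx hy; rewrite (linD lq) hx hy addr0.
  - by move=> a x hx; rewrite (linZ lq) hx scaler0.
  split.
  - by move=> x hx; rewrite -cE hx lin0.
  - by move=> x hx; rewrite -cF hx lin0.
  - by move=> x hx; rewrite -cH hx lin0.
pose xi i := peval (p ^+ i) Om w.
have hZ' : forall v, peval (p ^+ n) Om v = 0 by apply/hZ; exact: dvdpp.
have hxE : forall i, E (xi i) = eta *: xi i.
  by move=> i; rewrite /xi cE hw (linZ (peval_lin _ lOm)).
have hxS : forall i, xi i.+1 = peval p Om (xi i).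
  by move=> i; rewrite /xi exprS (peval_mul _ _ _ lOm).
have pnz : p != 0 by rewrite -size_poly_eq0 -lt0n (ltn_trans _ hp.1).
have F5 : forall i, (i < n)%N -> ~ gen E F H (xi i.+1) (xi i).
  move=> i hi hg.
  have k1 : peval (p ^+ (n.-1 - i)) Om (xi i.+1) = 0.
    rewrite /xi -(peval_mul _ _ _ lOm) -exprD.
    have -> : (n.-1 - i + i.+1 = n)%N by lia.
    exact: hZ'.
  have k2 := gen_min (ker _) k1 hg.
  rewrite /xi -(peval_mul _ _ _ lOm) -exprD in k2.
  have e : (n.-1 - i + i = n.-1)%N by lia.
  rewrite e in k2.
  have k3 : forall v, peval (p ^+ n.-1) Om v = 0.
    by move=> v; apply: (gen_min (ker _) k2 (hcyc v)).
  have := proj1 (hZ _) k3.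
  have -> : n = (n.-1).+1 by lia.
  rewrite exprSr -{2}(mul1r (p ^+ n.-1)) [_ * p]mulrC dvdp_mul2r ?expf_neq0 //.
  by rewrite dvdp1 => /eqP hs; move: hp.1; rewrite hs.
have [c [a [cnz pe]]] := irr_lin hp.
set U := u \Po ('X + 1).
have decomp : forall i y, gen E F H (xi i) y ->
    exists g, gen E F H (xi i.+1) (y - peval g H (xi i)).
  move=> i; set x := xi i; set x' := xi i.+1.
  have hOm : Om x = a *: x + c^-1 *: x'.
    rewrite /x' hxS -/x pe pevalZ pevalB pevalX pevalC scalerA mulVf //.
    by rewrite scale1r addrC subrK.
  have hFx : F x = (2%:R * eta)^-1 *: (peval (a%:P - U) H x + c^-1 *: x').
    have : Om x = (2%:R * eta) *: F x + peval U H x.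
      by rewrite /Om /Omega hxE (linZ lF) scalerA.
    rewrite hOm => e.
    have e2 : a *: x - peval U H x + c^-1 *: x' = (2%:R * eta) *: F x.
      by rewrite addrAC e addrK.
    rewrite pevalB pevalC e2 scalerA mulVf ?scale1r //.
    by rewrite mulf_neq0 // two_nz.
  have hA := gen_sub E F H x'.
  have [hA0 hAD hAZ [hAE hAF hAH]] := hA.
  pose D := fun y => exists g, gen E F H x' (y - peval g H x).
  have hDs : submodule E F H D.
    split.
    - by exists 0; rewrite peval0 subr0.
    - move=> y1 y2 [g1 h1] [g2 h2]; exists (g1 + g2).
      by rewrite pevalD opprD addrACA; apply: hAD.
    - move=> b y [g hg]; exists (b *: g).
      by rewrite pevalZ -scalerBr; apply: hAZ.
    split.
    - move=> y [g hg]; exists (eta *: (g \Po ('X + (-1)%:P))).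
      rewrite pevalZ -(linZ (peval_lin _ lH)) -hxE.
      rewrite -(peval_shift _ _ lE lH (hEH hrel)) -(linB lE).
      exact: hAE.
    - move=> y [g hg].
      exists ((2%:R * eta)^-1 *: ((g \Po ('X + 1%:P)) * (a%:P - U))).
      have -> : F y - peval ((2%:R * eta)^-1 *: ((g \Po ('X + 1%:P)) * (a%:P - U))) H x
          = F (y - peval g H x) + ((2%:R * eta)^-1 * c^-1) *: peval (g \Po ('X + 1%:P)) H x'.
        rewrite (linB lF) (peval_shift _ _ lF lH (hFH hrel)) hFx.
        rewrite (linZ (peval_lin _ lH)) (linD (peval_lin _ lH)) (linZ (peval_lin _ lH)).
        rewrite pevalZ (peval_mul _ _ _ lH) scalerDr scalerA.
        by rewrite opprD addrA subrK.
      apply: hAD; first exact: hAF.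
      by apply: hAZ; apply: (sub_pevalH _ hA); apply: gen_in.
    - move=> y [g hg]; exists (g * 'X).
      by rewrite peval_mulX -(peval_comm _ _ lH) -(linB lH); apply: hAH.
  move=> y hy; apply: (gen_min hDs _ hy).
  by exists 1; rewrite peval1 subrr.
have Airr : forall i, (i < n)%N -> quot_irreducible E F H (Vi i.+1) (Vi i).
  move=> i hi; split.
    by exists (xi i); split; [apply: gen_in | apply: F5].
  move=> S hS hAS hSB.
  case: (classic (subset_ S (Vi i.+1))) => h; [by left | right].
  have [y [Sy nAy]] : exists y, S y /\ ~ Vi i.+1 y.
    apply: NNPP => hn'; apply: h => y Sy; apply: NNPP => ny; apply: hn'.
    by exists y.
  have [g hg] := decomp i y (hSB _ Sy).
  have gnz : g != 0.
    by apply/eqP => g0; apply: nAy; move: hg; rewrite g0 peval0 subr0.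
  have Sg : S (peval g H (xi i)).
    by have := subB hS Sy (hAS _ hg); rewrite opprB addrC subrK.
  have Sx := key_irr lE lH (hEH hrel) heta (hxE i) hS gnz Sg.
  by move=> v; apply: (gen_min hS Sx).
have AB : forall i, subset_ (Vi i.+1) (Vi i).
  move=> i v; apply: gen_min; first exact: gen_sub.
  change (gen E F H (xi i) (xi i.+1)).
  by rewrite hxS; exact: (subOm _ p _ (gen_sub E F H (xi i)) (@gen_in _ E F H (xi i))).
have comp : composition_series E F H n Vi.
  split.
  - by move=> v; rewrite /Vi expr0 peval1; apply: hcyc.
  - move=> v hv.
    have hS0 : submodule E F H (fun v : V => v = 0).
      split => //; [by move=> ? ? -> ->; rewrite addr0 | by move=> ? ? ->; rewrite scaler0|].
      by split=> ? ->; rewrite lin0.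
    exact: (gen_min hS0 (hZ' w) hv).
  - by move=> i hi; split; [apply: gen_sub | apply: gen_sub | apply: AB | apply: Airr].
split; last by split => //; exists n, Vi.
move=> i hi; split; first exact: Airr.
exists (xi i); split; first exact: gen_in.
- by rewrite hxE subrr; have [] := gen_sub E F H (xi i.+1).
- move=> y hy; exists y; split => //; rewrite subrr.
  by have [] := gen_sub E F H (xi i.+1).
Qed.
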